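(* In the setting below, for all natural numbers $n,m\geq1$ with $n\neq m$, $M_n\cap M_m=\emptyset$.
   Context: Work in ZFA (ZF with a set $A$ of atoms, i.e. urelements that have no elements), extended by a primitive binary relation $\preccurlyeq$ on $A$, with Separation and Replacement holding for formulas mentioning $\preccurlyeq$. $A$ is an infinite set of atoms and $\preccurlyeq$ is a pre-ordering (reflexive, transitive) on $A$ with no minimal elements: for every $a\in A$ there is $b\in A$ with $b\preccurlyeq a$ and not $a\preccurlyeq b$. For $a\in A$, $pr(a)=\{b\in A:b\preccurlyeq a\}$; $LO(A,\preccurlyeq)$ is the set of nonempty $x\subseteq A$ with $pr(a)\subseteq x$ for all $a\in x$. For a set $X$ of sets, $LO(X,\subseteq)$ is the set of nonempty $x\subseteq X$ such that for every $y\in x$ and every $z\in X$ with $z\subseteq y$, $z\in x$. The magmatic hierarchy: $M_1=LO(A,\preccurlyeq)$ and $M_{n+1}=LO(M_n,\subseteq)$ for $n\geq1$. *)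

(* Defs.v *)
(* A model of ZFA-sets (well-founded sets over a type A of
   atoms) as Aczel trees with extensional equality; classes are predicates. *)
From Stdlib Require Import List.

Set Implicit Arguments.

Inductive V (A : Type) : Type :=
| atom : A -> V A
| sup : forall Ix : Type, (Ix -> V A) -> V A.

Arguments atom {A} a.
Arguments sup {A} Ix f.

Fixpoint eqV {A : Type} (x : V A) : V A -> Prop :=
  match x with
  | atom a => fun y => match y with atom b => a = b | @sup _ _ _ => False end
  | @sup _ Ix f => fun y =>
      match y with
      | atom _ => False
      | @sup _ Jx g => (forall i : Ix, exists j : Jx, eqV (f i) (g j)) /\
                   (forall j : Jx, exists i : Ix, eqV (f i) (g j))
      end
  end.

Definition memV {A : Type} (x y : V A) : Prop :=
  match y with
  | atom _ => False
  | @sup _ Ix f => exists i : Ix, eqV x (f i)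
  end.

Definition isSet {A : Type} (x : V A) : Prop :=
  match x with atom _ => False | @sup _ _ _ => True end.

Definition subV {A : Type} (z y : V A) : Prop :=
  forall w, memV w z -> memV w y.

Definition LO_atoms {A : Type} (le : A -> A -> Prop) (x : V A) : Prop :=
  isSet x /\ (exists w, memV w x) /\
  (forall w, memV w x -> exists a : A, eqV w (atom a)) /\
  (forall a b : A, memV (atom a) x -> le b a -> memV (atom b) x).

Definition LO_sub {A : Type} (X : V A -> Prop) (x : V A) : Prop :=
  isSet x /\ (exists w, memV w x) /\
  (forall w, memV w x -> X w) /\
  (forall y z, memV y x -> X z -> subV z y -> memV z x).

(* magmatic hierarchy: M 1 = LO(A,<=), M (n+1) = LO(M n, subseteq);
   M 0 is the empty class (unused) *)
Fixpoint M {A : Type} (le : A -> A -> Prop) (n : nat) : V A -> Prop :=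
  match n with
  | 0 => fun _ => False
  | S k => match k with
           | 0 => LO_atoms le
           | S _ => LO_sub (M le k)
           end
  end.

(* Main.v *)
Require Import Defs.
From Stdlib Require Import List Lia.

Lemma M_isSet {A : Type} (le : A -> A -> Prop) j (w : V A) : M le (S j) w -> isSet w.
Proof. destruct j as [|j]; simpl; intros [H _]; exact H. Qed.

Lemma base {A : Type} (le : A -> A -> Prop) j (x : V A) :
  ~ (M le 1 x /\ M le (S (S j)) x).
Proof.
  intros [[_ [[w Hw] [Ha _]]] [_ [_ [Hs _]]]].
  destruct (Ha w Hw) as [a Ea].
  pose proof (M_isSet le j w (Hs w Hw)) as Hset.
  destruct w; simpl in *; auto.
Qed.

Lemma gen {A : Type} (le : A -> A -> Prop) n : forall m, 1 <= n -> 1 <= m -> n <> m ->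
  forall x : V A, ~ (M le n x /\ M le m x).
Proof.
  induction n as [|n IH]; intros m hn hm hnm x [H1 H2]; [lia|].
  destruct m as [|m]; [lia|].
  destruct n as [|n].
  - destruct m as [|m]; [lia|]. exact (base le m x (conj H1 H2)).
  - destruct m as [|m].
    + exact (base le n x (conj H2 H1)).
    + destruct H1 as [_ [[w Hw] [H1 _]]]. destruct H2 as [_ [_ [H2 _]]].
      apply (IH (S m) ltac:(lia) ltac:(lia) ltac:(lia) w). split; auto.
Qed.

Theorem lemma4p8 (A : Type) (le : A -> A -> Prop)
  (A_infinite : ~ exists l : list A, forall a : A, In a l)
  (le_refl : forall a, le a a)
  (le_trans : forall a b c, le a b -> le b c -> le a c)
  (no_min : forall a, exists b, le b a /\ ~ le a b)
  (n m : nat) (hn : 1 <= n) (hm : 1 <= m) (hnm : n <> m) :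
  forall x : V A, ~ (M le n x /\ M le m x).
Proof. exact (gen le n m hn hm hnm). Qed.
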